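(* Let $K=3$, let $\check\Sigma$ be a symmetric positive semidefinite $d_1d_2d_3\times d_1d_2d_3$ matrix, and let $\bar\Sigma_1,\bar\Sigma_2,\bar\Sigma_3$ be produced from $\check\Sigma$ by the hierarchical SVD procedure described in the context. Then: (i) with an appropriate choice of the signs of the leading singular vectors, each $\bar\Sigma_k$ ($k=1,2,3$) is symmetric and positive semidefinite; (ii) suppose $d_1,d_2,d_3$ are fixed, $\Sigma=\Sigma_3\otimes\Sigma_2\otimes\Sigma_1$ with each $\Sigma_k$ a $d_k\times d_k$ symmetric positive definite matrix normalized by $\|\Sigma_1\|_F=\|\Sigma_2\|_F=1$, and $\check\Sigma=\check\Sigma_T$ is a sequence of estimators with $\|\check\Sigma-\Sigma\|_F=o_p(1)$ as $T\to\infty$. Then, with the signs chosen as in (i), $\|\bar\Sigma_k-\Sigma_k\|_F=o_p(1)$ for $k=1,2,3$.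
   Context: $\mathrm{vec}$ stacks columns and $\mathrm{vec}^{-1}$ is its inverse (reshaping a vector of length $m^2$ into an $m\times m$ matrix). Let $\mathcal R_1:\mathbb R^{d_1d_2d_3\times d_1d_2d_3}\to\mathbb R^{d_1^2\times d_2^2d_3^2}$ be the linear rearrangement with $\mathcal R_1(B\otimes A)=\mathrm{vec}(A)\mathrm{vec}(B)'$ for all $A\in\mathbb R^{d_1\times d_1}$, $B\in\mathbb R^{d_2d_3\times d_2d_3}$, and $\mathcal R_2:\mathbb R^{d_2d_3\times d_2d_3}\to\mathbb R^{d_2^2\times d_3^2}$ the linear rearrangement with $\mathcal R_2(C\otimes B)=\mathrm{vec}(B)\mathrm{vec}(C)'$ for $B\in\mathbb R^{d_2\times d_2}$, $C\in\mathbb R^{d_3\times d_3}$. Hierarchical SVD procedure: let $s_1,u_1,v_1$ be the largest singular value and corresponding unit left/right singular vectors of $S_1=\mathcal R_1(\check\Sigma)$; set $\bar\Sigma_1=\mathrm{vec}^{-1}(u_1)$. Let $\sigma_1,a_1,b_1$ be the largest singular value and unit left/right singular vectors of $S_2=\mathcal R_2(\mathrm{vec}^{-1}(s_1v_1))$; set $\bar\Sigma_2=\mathrm{vec}^{-1}(a_1)$ and $\bar\Sigma_3=\mathrm{vec}^{-1}(\sigma_1b_1)$. *)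

(* Defs.v *)
From HB Require Import structures.
From mathcomp Require Import all_boot all_order all_algebra.
From mathcomp Require Import all_classical all_reals all_analysis.
From mathcomp Require Import zify.

Set Implicit Arguments.
Unset Strict Implicit.
Unset Printing Implicit Defensive.

Import Order.TTheory GRing.Theory Num.Theory.
Local Open Scope ring_scope.
Local Open Scope classical_set_scope.

(* Index bookkeeping.  A pair (i, j) in 'I_m x 'I_n is stored at the   *)
(* position i + m * j of 'I_(m*n): this is the column-stacking (vec)   *)
(* convention, and also the Kronecker convention (B (x) A)             *)
(* [(i1 + m j1),(i2 + m j2)] = B j1 j2 * A i1 i2.                      *)

Lemma pidx_proof m n (i : 'I_m) (j : 'I_n) : (i + m * j < m * n)%N.
Proof. have := ltn_ord i; have := ltn_ord j; nia. Qed.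

Definition pidx m n (i : 'I_m) (j : 'I_n) : 'I_(m * n) := Ordinal (pidx_proof i j).

Lemma lo_proof m n (k : 'I_(m * n)) : (k %% m < m)%N.
Proof.
have hk := ltn_ord k; have m0 : (0 < m)%N by case: m k hk => //.
by rewrite ltn_pmod.
Qed.

Lemma hi_proof m n (k : 'I_(m * n)) : (k %/ m < n)%N.
Proof.
have hk := ltn_ord k; have m0 : (0 < m)%N by case: m k hk => //.
rewrite ltn_divLR //; move: hk; set K := nat_of_ord k; rewrite mulnC; exact.
Qed.

Definition lo m n (k : 'I_(m * n)) : 'I_m := Ordinal (lo_proof k).
Definition hi m n (k : 'I_(m * n)) : 'I_n := Ordinal (hi_proof k).

Section Defs.
Variable R : realType.

Definition vecm m n (A : 'M[R]_(m, n)) : 'cV[R]_(m * n) :=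
  \col_k A (lo k) (hi k).

Definition unvec m n (v : 'cV[R]_(m * n)) : 'M[R]_(m, n) :=
  \matrix_(i, j) v (pidx i j) 0.

Definition kron m n (B : 'M[R]_n) (A : 'M[R]_m) : 'M[R]_(m * n) :=
  \matrix_(k, l) (B (hi k) (hi l) * A (lo k) (lo l)).

(* The linear rearrangement R : R^{mn x mn} -> R^{m^2 x n^2} with
   R (B (x) A) = vec(A) vec(B)' ; explicitly
   R(M)[(i1 + m i2), (j1 + n j2)] = M[(i1 + m j1), (i2 + m j2)]. *)
Definition rearr m n (M : 'M[R]_(m * n)) : 'M[R]_(m * m, n * n) :=
  \matrix_(r, c) M (pidx (lo r) (lo c)) (pidx (hi r) (hi c)).

Definition sqnorm n (x : 'cV[R]_n) : R := \sum_i x i 0 ^+ 2.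
Definition frob m n (A : 'M[R]_(m, n)) : R :=
  Num.sqrt (\sum_i \sum_j A i j ^+ 2).

Definition unit_vec n (x : 'cV[R]_n) : Prop := sqnorm x = 1.

Definition symmetric n (A : 'M[R]_n) : Prop := A^T = A.
Definition psd n (A : 'M[R]_n) : Prop :=
  symmetric A /\ forall x : 'cV[R]_n, 0 <= (x^T *m A *m x) 0 0.
Definition pd n (A : 'M[R]_n) : Prop :=
  symmetric A /\ forall x : 'cV[R]_n, x != 0 -> 0 < (x^T *m A *m x) 0 0.

Definition singular_triple m n (S : 'M[R]_(m, n)) (s : R)
  (u : 'cV[R]_m) (v : 'cV[R]_n) : Prop :=
  [/\ 0 <= s, unit_vec u, unit_vec v, S *m v = s *: u & S^T *m u = s *: v].

Definition top_singular_triple m n (S : 'M[R]_(m, n)) (s : R)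
  (u : 'cV[R]_m) (v : 'cV[R]_n) : Prop :=
  singular_triple S s u v /\
  forall s' u' v', singular_triple S s' u' v' -> s' <= s.

(* The hierarchical SVD procedure (K = 3): given the chosen leading
   singular triples (s1,u1,v1) of S1 = R1(Sc) and (sig1,a1,b1) of
   S2 = R2(vec^{-1}(s1 v1)), the outputs are
   Sb1 = vec^{-1}(u1), Sb2 = vec^{-1}(a1), Sb3 = vec^{-1}(sig1 b1). *)
Definition hsvd_choice d1 d2 d3 (Sc : 'M[R]_(d1 * (d2 * d3)))
  (s1 : R) (u1 : 'cV[R]_(d1 * d1)) (v1 : 'cV[R]_((d2 * d3) * (d2 * d3)))
  (sig1 : R) (a1 : 'cV[R]_(d2 * d2)) (b1 : 'cV[R]_(d3 * d3)) : Prop :=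
  top_singular_triple (rearr Sc) s1 u1 v1 /\
  top_singular_triple (rearr (unvec (s1 *: v1))) sig1 a1 b1.

Definition hsvd1 d1 (u1 : 'cV[R]_(d1 * d1)) : 'M[R]_d1 := unvec u1.
Definition hsvd2 d2 (a1 : 'cV[R]_(d2 * d2)) : 'M[R]_d2 := unvec a1.
Definition hsvd3 d3 (sig1 : R) (b1 : 'cV[R]_(d3 * d3)) : 'M[R]_d3 :=
  unvec (sig1 *: b1).

End Defs.

(* Convergence in (outer) probability: X_T - c = o_p(1) in Frobenius norm.
   For every eps, delta > 0, eventually the event {||X_T - c||_F > eps}
   is contained in a measurable set of probability at most delta.
   (For measurable X_T this is the usual P(||X_T - c||_F > eps) -> 0.) *)
Definition conv_in_prob {R : realType} {d} {Omega : measurableType d}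
  (P : probability Omega R) m n (X : nat -> Omega -> 'M[R]_(m, n))
  (c : 'M[R]_(m, n)) : Prop :=
  forall eps delta : R, 0 < eps -> 0 < delta ->
    exists N : nat, forall T : nat, (N <= T)%N ->
      exists A : set Omega, [/\ measurable A, (P A <= delta%:E)%E &
        [set w | eps < frob (X T w - c)] `<=` A].

(* Main.v *)
Require Import Defs.
From HB Require Import structures.
From mathcomp Require Import all_boot all_order all_algebra.
From mathcomp Require Import all_classical all_reals all_analysis.
From mathcomp Require Import zify ring lra.

Set Implicit Arguments.
Unset Strict Implicit.
Unset Printing Implicit Defensive.
Import Order.TTheory GRing.Theory Num.Theory.
Local Open Scope ring_scope.


Lemma m_pos_of m n (k : 'I_(m * n)) : (0 < m)%N.
Proof. have := ltn_ord k; case: m k => //. Qed.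

Lemma lo_pidx m n (i : 'I_m) (j : 'I_n) : lo (pidx i j) = i.
Proof.
apply: val_inj => /=; have hi := ltn_ord i.
by rewrite addnC mulnC modnMDl modn_small.
Qed.

Lemma hi_pidx m n (i : 'I_m) (j : 'I_n) : hi (pidx i j) = j.
Proof.
apply: val_inj => /=; have hi := ltn_ord i.
have m0 : (0 < m)%N by case: m i hi.
by rewrite addnC mulnC divnMDl // divn_small // addn0.
Qed.

Lemma pidx_lohi m n (k : 'I_(m * n)) : pidx (lo k) (hi k) = k.
Proof. apply: val_inj => /=; by rewrite addnC mulnC -divn_eq. Qed.

Lemma sum_pidx (V : nmodType) m n (F : 'I_(m * n) -> V) :
  \sum_k F k = \sum_(i < m) \sum_(j < n) F (pidx i j).
Proof.
rewrite pair_big /=.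
rewrite (reindex (fun p : 'I_m * 'I_n => pidx p.1 p.2)) //=.
exists (fun k => (lo k, hi k)) => [[i j] _|k _] /=.
  by rewrite lo_pidx hi_pidx.
by rewrite pidx_lohi.
Qed.


Section Vec.
Variable R : realType.

Definition dot n (u v : 'cV[R]_n) : R := \sum_i u i 0 * v i 0.

Lemma dotC n (u v : 'cV[R]_n) : dot u v = dot v u.
Proof. by apply: eq_bigr => i _; rewrite mulrC. Qed.

Lemma dotDl n (u v w : 'cV[R]_n) : dot (u + v) w = dot u w + dot v w.
Proof. by rewrite /dot -big_split; apply: eq_bigr => i _; rewrite mxE mulrDl. Qed.

Lemma dotDr n (u v w : 'cV[R]_n) : dot w (u + v) = dot w u + dot w v.
Proof. by rewrite dotC dotDl !(dotC w). Qed.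

Lemma dotZl n a (u v : 'cV[R]_n) : dot (a *: u) v = a * dot u v.
Proof. by rewrite /dot mulr_sumr; apply: eq_bigr => i _; rewrite mxE mulrA. Qed.

Lemma dotZr n a (u v : 'cV[R]_n) : dot u (a *: v) = a * dot u v.
Proof. by rewrite dotC dotZl dotC. Qed.

Lemma dotNl n (u v : 'cV[R]_n) : dot (- u) v = - dot u v.
Proof. by rewrite -scaleN1r dotZl mulN1r. Qed.

Lemma dotNr n (u v : 'cV[R]_n) : dot u (- v) = - dot u v.
Proof. by rewrite dotC dotNl dotC. Qed.

Lemma dotBl n (u v w : 'cV[R]_n) : dot (u - v) w = dot u w - dot v w.
Proof. by rewrite dotDl dotNl. Qed.

Lemma dotBr n (u v w : 'cV[R]_n) : dot w (u - v) = dot w u - dot w v.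
Proof. by rewrite dotDr dotNr. Qed.

Lemma dot0l n (u : 'cV[R]_n) : dot 0 u = 0.
Proof. by rewrite /dot big1 // => i _; rewrite mxE mul0r. Qed.

Lemma dot0r n (u : 'cV[R]_n) : dot u 0 = 0.
Proof. by rewrite dotC dot0l. Qed.

Lemma dot_suml n (I : Type) (r : seq I) (P : pred I) (F : I -> 'cV[R]_n) v :
  dot (\sum_(i <- r | P i) F i) v = \sum_(i <- r | P i) dot (F i) v.
Proof.
elim/big_rec2: _ => [|i y1 y2 _ <-]; first by rewrite dot0l.
by rewrite dotDl.
Qed.

Lemma dot_sumr n (I : Type) (r : seq I) (P : pred I) (F : I -> 'cV[R]_n) v :
  dot v (\sum_(i <- r | P i) F i) = \sum_(i <- r | P i) dot v (F i).
Proof. by rewrite dotC dot_suml; apply: eq_bigr => i _; rewrite dotC. Qed.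

Lemma sqnormE n (u : 'cV[R]_n) : sqnorm u = dot u u.
Proof. by apply: eq_bigr => i _; rewrite expr2. Qed.

Lemma dot_ge0 n (u : 'cV[R]_n) : 0 <= dot u u.
Proof. by apply: sumr_ge0 => i _; rewrite -expr2 sqr_ge0. Qed.

Lemma dot_eq0 n (u : 'cV[R]_n) : dot u u = 0 -> u = 0.
Proof.
move=> /eqP; rewrite /dot psumr_eq0 => [/allP H|i _]; last by rewrite -expr2 sqr_ge0.
apply/matrixP => i j; rewrite (ord1 j) mxE.
by have /(_ (mem_index_enum i)) := H i; rewrite implyTb mulf_eq0 orbb => /eqP.
Qed.

Lemma dotE n (u v : 'cV[R]_n) : (u^T *m v) 0 0 = dot u v.
Proof. by rewrite mxE; apply: eq_bigr => i _; rewrite mxE. Qed.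

Lemma dot_mulmx m n (u : 'cV[R]_m) (M : 'M[R]_(m, n)) (v : 'cV[R]_n) :
  dot u (M *m v) = dot (M^T *m u) v.
Proof.
rewrite -!dotE trmx_mul trmxK mulmxA //.
Qed.

Lemma bilE m n (u : 'cV[R]_m) (M : 'M[R]_(m, n)) (v : 'cV[R]_n) :
  (u^T *m M *m v) 0 0 = dot u (M *m v).
Proof. by rewrite -mulmxA dotE. Qed.

Lemma CS n (u v : 'cV[R]_n) : dot u v ^+ 2 <= dot u u * dot v v.
Proof.
have [u0|] := eqVneq (dot u u) 0.
  by rewrite (dot_eq0 u0) !dot0l mul0r expr2 mulr0.
move=> nz; have a0 : 0 < dot u u by rewrite lt_def nz dot_ge0.
have := dot_ge0 (dot u u *: v - dot u v *: u).
rewrite !(dotBl, dotBr, dotZl, dotZr) (dotC v u).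
move=> H.
have : 0 <= dot u u * (dot u u * dot v v - dot u v ^+ 2) by
  move: H; congr (0 <= _); ring.
by rewrite pmulr_rge0 // subr_ge0.
Qed.

Definition nrm n (u : 'cV[R]_n) := Num.sqrt (dot u u).

Lemma nrm_ge0 n (u : 'cV[R]_n) : 0 <= nrm u.
Proof. exact: sqrtr_ge0. Qed.

Lemma nrm_sq n (u : 'cV[R]_n) : nrm u ^+ 2 = dot u u.
Proof. by rewrite sqr_sqrtr // dot_ge0. Qed.

Lemma dot_le_nrm n (u v : 'cV[R]_n) : dot u v <= nrm u * nrm v.
Proof.
have [h|h] := boolP (dot u v <= 0).
  by apply: (le_trans h); rewrite mulr_ge0 ?nrm_ge0.
move: h; rewrite -ltNge => h.
rewrite -ler_sqr ?nnegrE ?mulr_ge0 ?nrm_ge0 //; last exact: ltW.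
rewrite exprMn !nrm_sq; exact: CS.
Qed.

Lemma nrm_triangle n (u v : 'cV[R]_n) : nrm (u + v) <= nrm u + nrm v.
Proof.
rewrite -ler_sqr; last 2 first.
- by rewrite nnegrE nrm_ge0.
- by rewrite nnegrE addr_ge0 ?nrm_ge0.
rewrite sqrrD !nrm_sq.
rewrite !(dotDl, dotDr) (dotC v u).
have := dot_le_nrm u v; lra.
Qed.

End Vec.

From mathcomp Require Import complex.
Import Order.TTheory GRing.Theory Num.Theory.
Local Open Scope ring_scope.


Section Eig.
Variable R : realType.
Local Notation C := (complex R).
Local Notation toC := (real_complex R).

Lemma real_eigenvalue n (S : 'M[R]_n.+1) : S^T = S ->
  exists mu : R, exists2 w : 'rV[R]_n.+1, w *m S = mu *: w & w != 0.
Proof.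
move=> Ssym.
pose Sc := map_mx toC S.
have [lam rl] : exists lam : C, root (char_poly Sc) lam.
  by apply/closed_rootP; rewrite size_char_poly.
move: rl; rewrite -eigenvalue_root_char => /eigenvalueP [z zS znz].
pose zc := map_mx (@conjc R) z.
have Scc : map_mx (@conjc R) Sc = Sc.
  by apply/matrixP => i j; rewrite !mxE /= oppr0.
have zcS : zc *m Sc = (conjc lam) *: zc.
  have := congr1 (map_mx (@conjc R)) zS; rewrite map_mxM Scc => ->.
  by apply/matrixP => i j; rewrite !mxE rmorphM.
have Sct : Sc^T = Sc by apply/matrixP => i j; rewrite !mxE -[in RHS]Ssym mxE.
pose N := (z *m zc^T) 0 0.
have q1 : (z *m Sc *m zc^T) 0 0 = lam * N.
  by rewrite zS -scalemxAl mxE.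
have q2 : (z *m Sc *m zc^T) 0 0 = conjc lam * N.
  by rewrite -mulmxA -Sct -trmx_mul zcS linearZ /= -scalemxAr mxE.
have Nnz : N != 0.
  apply: contraNneq znz => N0; apply/eqP/rowP => j.
  have : \sum_(i < n.+1) z 0 i * conjc (z 0 i) = N.
    by rewrite /N mxE; apply: eq_bigr => i _; rewrite !mxE.
  rewrite N0.
  move/eqP; rewrite psumr_eq0 => [/allP/(_ j (mem_index_enum _))|i _].
    by rewrite implyTb mulf_eq0 conjc_eq0 orbb mxE => /eqP.
  exact: mulcJ_ge0.
have lamc : conjc lam = lam.
  by apply: (mulIf Nnz); rewrite -q1 -q2.
have lamR : lam = toC (complex.Re lam).
  case: lam lamc {q1 q2 zS zcS} => a b /= [] hb.
  by have -> : b = 0 by lra.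
exists (complex.Re lam).
have : eigenvalue S (complex.Re lam).
  rewrite eigenvalue_root_char -(fmorph_root toC) map_char_poly.
  rewrite [X in root _ X](_ : _ = lam); last exact: esym lamR.
  by rewrite -eigenvalue_root_char; apply/eigenvalueP; exists z.
by move/eigenvalueP.
Qed.

Lemma unit_eigvec n (S : 'M[R]_n.+1) : S^T = S ->
  exists mu : R, exists y : 'cV[R]_n.+1, dot y y = 1 /\ S *m y = mu *: y.
Proof.
move=> Ssym; have [mu [w wS wnz]] := real_eigenvalue Ssym.
pose y0 := w^T.
have y0S : S *m y0 = mu *: y0.
  by rewrite /y0 -{1}Ssym -trmx_mul wS linearZ.
have y0nz : dot y0 y0 != 0.
  apply: contra wnz => /eqP /dot_eq0 h; apply/eqP.
  by rewrite -[w]trmxK -/y0 h trmx0.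
have y0p : 0 < dot y0 y0 by rewrite lt_def y0nz dot_ge0.
exists mu, ((nrm y0)^-1 *: y0); split.
  rewrite dotZl dotZr mulrA -expr2 exprVn nrm_sq mulVf //.
by rewrite -scalemxAr y0S !scalerA mulrC.
Qed.

Lemma outerE n (w v : 'cV[R]_n) : (w *m w^T) *m v = dot w v *: w.
Proof.
rewrite -mulmxA; apply/matrixP => i j; rewrite (ord1 j) !mxE big_ord1.
by rewrite mulrC dotE.
Qed.

Lemma dot_delta n (y : 'cV[R]_n.+1) : dot (delta_mx 0 0) y = y 0 0.
Proof.
rewrite /dot (bigD1 0) //= big1 => [|i /negPf ne]; rewrite !mxE ?eqxx ?ne ?mul1r ?addr0 //.
by rewrite mul0r.
Qed.

Lemma householder n (y : 'cV[R]_n.+1) : dot y y = 1 ->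
  exists H : 'M[R]_n.+1, [/\ H^T = H, H *m H = 1%:M & H *m delta_mx 0 0 = y].
Proof.
move=> yu; pose e0 : 'cV[R]_n.+1 := delta_mx 0 0.
have e0u : dot e0 e0 = 1 by rewrite dot_delta mxE.
pose w := e0 - y.
have [w0|wnz] := eqVneq (dot w w) 0.
  exists 1%:M; split; rewrite ?trmx1 ?mul1mx //.
  by move/dot_eq0/eqP: w0; rewrite subr_eq0 => /eqP.
pose c := 2 / dot w w.
exists (1%:M - c *: (w *m w^T)); split.
- by rewrite linearB /= trmx1 linearZ /= trmx_mul trmxK.
- have PP : (w *m w^T) *m (w *m w^T) = dot w w *: (w *m w^T).
    by rewrite mulmxA outerE scalemxAl.
  rewrite mulmxBl mul1mx mulmxBr mulmx1 -scalemxAl -scalemxAr PP !scalerA.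
  have -> : c * c * dot w w = c + c.
    by rewrite /c; field.
  by rewrite scalerDl opprB addrK subrK.
- rewrite mulmxBl mul1mx -scalemxAl outerE scalerA.
  have hw : dot w e0 = 1 - y 0 0 by rewrite /w dotBl e0u dotC dot_delta.
  have hww : dot w w = 2 * (1 - y 0 0).
    rewrite /w !(dotBl, dotBr) e0u yu (dotC y) dot_delta; ring.
  have -> : c * dot w e0 = 1.
    have h1 : 1 - y 0 0 != 0.
      by apply: contraNneq wnz => h; rewrite hww h mulr0.
    by rewrite /c hw hww; field.
  by rewrite scale1r /w opprB addrC subrK.
Qed.

Lemma col_deltaE m n (A : 'M[R]_(m, n)) i j : (A *m delta_mx j (0 : 'I_1)) i 0 = A i j.
Proof.
rewrite mxE (bigD1 j) //= big1 => [|k /negPf ne]; rewrite !mxE ?eqxx ?ne ?mulr1 ?addr0 //.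
by rewrite mulr0.
Qed.

Lemma spectral n (S : 'M[R]_n) : S^T = S ->
  exists Y : 'M[R]_n, exists d : 'rV[R]_n,
    Y^T *m Y = 1%:M /\ S *m Y = Y *m diag_mx d.
Proof.
elim: n S => [|n IH] S Ssym.
  exists 1%:M, 0; split; first by rewrite trmx1 mulmx1.
  by apply/matrixP => [[]].
have [mu [y [yu yS]]] := unit_eigvec Ssym.
have [H [Hs HH He]] := householder yu.
pose T := H *m S *m H.
have Ts : T^T = T by rewrite /T !trmx_mul Hs Ssym mulmxA.
have Te : T *m (delta_mx 0 0 : 'cV[R]_n.+1) = mu *: delta_mx 0 0.
  rewrite /T -!mulmxA He yS -scalemxAr -He mulmxA HH mul1mx //.
have Tcol i : T i 0 = mu * (i == 0)%:R.
  by rewrite -col_deltaE Te mxE mxE andbT.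
have SH : S *m H = H *m T by rewrite /T !mulmxA HH mul1mx.
clearbody T.
have Tsym i j : T i j = T j i by rewrite -{1}Ts mxE.
pose T1 : 'M[R]_(1 + n) := T.
pose T2 := drsubmx T1.
have T1E : T1 = block_mx (mu%:M) 0 0 T2.
  rewrite -[T1 in LHS]submxK; congr block_mx.
  - apply/matrixP => i j; rewrite (ord1 i) (ord1 j) !mxE /= mulr1n.
    have -> : lshift n (0 : 'I_1) = 0 :> 'I_n.+1 by apply: val_inj.
    by rewrite /T1 Tcol eqxx mulr1.
  - apply/matrixP => i j; rewrite (ord1 i) !mxE /=.
    have -> : lshift n (0 : 'I_1) = 0 :> 'I_n.+1 by apply: val_inj.
    rewrite /T1 Tsym Tcol.
    by have -> : (rshift 1 j == 0 :> 'I_n.+1) = false by [] ; rewrite mulr0.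
  - apply/matrixP => i j; rewrite (ord1 j) !mxE /=.
    have -> : lshift n (0 : 'I_1) = 0 :> 'I_n.+1 by apply: val_inj.
    rewrite /T1 Tcol.
    by have -> : (rshift 1 i == 0 :> 'I_n.+1) = false by [] ; rewrite mulr0.
have T2s : T2^T = T2.
  by rewrite /T2 trmx_drsub /T1 Ts.
have [Y2 [d2 [Y2o Y2S]]] := IH T2 T2s.
pose B : 'M[R]_(1 + n) := block_mx 1%:M 0 0 Y2.
exists (H *m B), (row_mx (mu%:M : 'rV[R]_1) d2); split.
  rewrite trmx_mul mulmxA -[B^T *m H^T *m H]mulmxA Hs HH mulmx1.
  rewrite /B tr_block_mx (@mulmx_block _ 1 n 1 n 1 n) !trmx0 trmx1 !mulmx0 !mul0mx !mulmx1.
  by rewrite !addr0 !add0r Y2o -scalar_mx_block.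
rewrite mulmxA SH -mulmxA -[H *m B *m _]mulmxA; congr (H *m _).
change (T1 *m B = B *m diag_mx (row_mx (mu%:M : 'rV[R]_1) d2)).
rewrite T1E /B diag_mx_row (@mulmx_block _ 1 n 1 n 1 n) (@mulmx_block _ 1 n 1 n 1 n).
rewrite !mulmx0 !mul0mx !mulmx1 !mul1mx !addr0 !add0r Y2S.
congr block_mx; apply/matrixP => i j; rewrite (ord1 i) (ord1 j) !mxE /=.
by rewrite mulr1n.
Qed.

End Eig.


Section Max.
Variable R : realType.

Lemma spec_fam n (S : 'M[R]_n) : S^T = S ->
  exists (d : 'I_n -> R) (y : 'I_n -> 'cV[R]_n),
    [/\ forall i j, dot (y i) (y j) = (i == j)%:R,
        forall i, S *m y i = d i *: y i &
        forall v, v = \sum_i dot (y i) v *: y i].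
Proof.
move=> Ssym; have [Y [d [Yo SY]]] := spectral Ssym.
have YYt : Y *m Y^T = 1%:M by apply: mulmx1C.
exists (fun i => d 0 i), (fun i => col i Y); split.
- move=> i j; have := congr1 (fun M : 'M[R]_n => M i j) Yo.
  rewrite !mxE => <-; apply: eq_bigr => k _; rewrite !mxE //.
- move=> i; apply/matrixP => a b; rewrite (ord1 b).
  transitivity ((S *m Y) a i).
    by rewrite !mxE; apply: eq_bigr => j _; rewrite !mxE.
  rewrite SY !mxE (bigD1 i) //= big1 => [|k /negPf ne]; rewrite !mxE ?ne ?eqxx ?mulr0 ?addr0 //.
  by rewrite mulr1n mulrC.
- move=> v; apply/matrixP => a b; rewrite (ord1 b).
  rewrite -{1}[v]mul1mx -YYt -mulmxA !mxE summxE; apply: eq_bigr => i _.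
  rewrite !mxE mulrC; congr (_ * _).
  by rewrite -dotE !mxE; apply: eq_bigr => k _; rewrite !mxE.
Qed.

Lemma parseval n (y : 'I_n -> 'cV[R]_n) :
  (forall i j, dot (y i) (y j) = (i == j)%:R) ->
  (forall v, v = \sum_i dot (y i) v *: y i) ->
  forall v w, dot v w = \sum_i dot (y i) v * dot (y i) w.
Proof.
move=> yo yb v w; rewrite {1}(yb v) dot_suml; apply: eq_bigr => i _.
by rewrite dotZl dotC.
Qed.

Lemma max_bil p q (M : 'M[R]_(p, q)) : (0 < q)%N ->
  exists s, [/\ 0 <= s, (forall u v, dot u (M *m v) <= s * nrm u * nrm v) &
    exists v, dot v v = 1 /\ dot (M *m v) (M *m v) = s ^+ 2].
Proof.
case: q M => // q M _.
have MMs : (M^T *m M)^T = M^T *m M by rewrite trmx_mul trmxK.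
have [d [y [yo yS yb]]] := spec_fam MMs.
have dE i : d i = dot (M *m y i) (M *m y i).
  by rewrite dot_mulmx mulmxA yS dotZl yo eqxx mulr1.
have d0 i : 0 <= d i by rewrite dE dot_ge0.
have [imax _ Hmax] := @arg_maxP _ R _ ord0 predT d isT.
set lam := d imax.
have Hm i : d i <= lam by exact: Hmax.
have bnd v : dot (M *m v) (M *m v) <= lam * dot v v.
  rewrite dot_mulmx mulmxA {1}(yb v) mulmx_sumr dot_suml (parseval yo yb v v).
  rewrite mulr_sumr; apply: ler_sum => i _.
  rewrite -scalemxAr yS scalerA dotZl.
  have := Hm i; have := sqr_ge0 (dot (y i) v); nra.
have lam0 : 0 <= lam by apply: d0.
exists (Num.sqrt lam); split.
- exact: sqrtr_ge0.
- move=> u v; apply: (le_trans (dot_le_nrm u (M *m v))).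
  have h : nrm (M *m v) <= Num.sqrt lam * nrm v.
    rewrite -ler_sqr; last 2 first.
    + by rewrite nnegrE nrm_ge0.
    + by rewrite nnegrE mulr_ge0 ?sqrtr_ge0 ?nrm_ge0.
    by rewrite nrm_sq exprMn sqr_sqrtr // nrm_sq bnd.
  have := nrm_ge0 u; have := nrm_ge0 (M *m v); nra.
- exists (y imax); split; first by rewrite yo eqxx.
  by rewrite sqr_sqrtr // -dE.
Qed.

Lemma sq_le_of (x s : R) : 0 <= x -> 0 <= s -> x ^+ 2 <= s * x -> x ^+ 2 <= s ^+ 2.
Proof. move=> x0 s0 h; nra. Qed.

Lemma nrm_sq_bound p q (M : 'M[R]_(p, q)) s :
  0 <= s -> (forall u v, dot u (M *m v) <= s * nrm u * nrm v) ->
  forall v, dot v v = 1 -> dot (M *m v) (M *m v) <= s ^+ 2.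
Proof.
move=> s0 B v vu; rewrite -nrm_sq; apply: sq_le_of => //; first exact: nrm_ge0.
by rewrite nrm_sq (le_trans (B _ _)) // /nrm vu sqrtr1 mulr1.
Qed.

Lemma nrmT_sq_bound p q (M : 'M[R]_(p, q)) s :
  0 <= s -> (forall u v, dot u (M *m v) <= s * nrm u * nrm v) ->
  forall u, dot u u = 1 -> dot (M^T *m u) (M^T *m u) <= s ^+ 2.
Proof.
move=> s0 B u uu; rewrite -nrm_sq; apply: sq_le_of => //; first exact: nrm_ge0.
rewrite nrm_sq -dot_mulmx (le_trans (B _ _)) // /nrm uu sqrtr1 mulr1.
by rewrite /nrm.
Qed.

Lemma top_of_max p q (M : 'M[R]_(p, q)) s u v :
  0 <= s -> (forall u v, dot u (M *m v) <= s * nrm u * nrm v) ->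
  dot u u = 1 -> dot v v = 1 -> dot u (M *m v) = s ->
  top_singular_triple M s u v.
Proof.
move=> s0 B uu vu uMv.
have nu : nrm u = 1 by rewrite /nrm uu sqrtr1.
have nv : nrm v = 1 by rewrite /nrm vu sqrtr1.
split; first split.
- exact: s0.
- by rewrite /unit_vec sqnormE.
- by rewrite /unit_vec sqnormE.
- apply/eqP; rewrite -subr_eq0; apply/eqP/dot_eq0/eqP.
  rewrite eq_le dot_ge0 andbT !(dotBl, dotBr, dotZl, dotZr) uu (dotC (M *m v)) uMv.
  have := nrm_sq_bound s0 B vu; lra.
- apply/eqP; rewrite -subr_eq0; apply/eqP/dot_eq0/eqP.
  rewrite eq_le dot_ge0 andbT !(dotBl, dotBr, dotZl, dotZr) vu.
  rewrite (dotC v (M^T *m u)) -[dot (M^T *m u) v]dot_mulmx uMv.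
  have := nrmT_sq_bound s0 B uu; lra.
- move=> s' u' v' [s'0 u'u v'u Mv' _].
  move: u'u v'u; rewrite /unit_vec !sqnormE => u'u v'u.
  have -> : s' = dot u' (M *m v') by rewrite Mv' dotZr u'u mulr1.
  by rewrite (le_trans (B _ _)) // /nrm u'u v'u sqrtr1 !mulr1.
Qed.

Lemma exists_top p q (M : 'M[R]_(p, q)) : (0 < p)%N -> (0 < q)%N ->
  exists s u v, [/\ top_singular_triple M s u v,
    (forall u v, dot u (M *m v) <= s * nrm u * nrm v) & 0 <= s].
Proof.
case: p M => // p M _ q0.
have [s [s0 B [v [vu Mv]]]] := max_bil M q0.
have [sz|spos] := eqVneq s 0.
  exists s, (delta_mx 0 0), v; split => //; apply: top_of_max => //.
  - by rewrite dot_delta mxE.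
  - have : dot (M *m v) (M *m v) = 0 by rewrite Mv sz expr2 mulr0.
    by move/dot_eq0 => ->; rewrite dot0r sz.
exists s, (s^-1 *: (M *m v)), v; split => //; apply: top_of_max => //.
- by rewrite dotZl dotZr Mv mulrA -expr2 exprVn mulVf // expf_neq0.
- by rewrite dotZl Mv expr2 mulrA mulVf // mul1r.
Qed.

End Max.


Section Repl.
Variable R : realType.

Lemma vecmE m n (A : 'M[R]_(m, n)) i j : vecm A (pidx i j) 0 = A i j.
Proof. by rewrite mxE lo_pidx hi_pidx. Qed.

Lemma unvecK m n (u : 'cV[R]_(m * n)) : vecm (unvec u) = u.
Proof.
apply/matrixP => k b; rewrite (ord1 b) !mxE pidx_lohi //.
Qed.

Lemma vecmK m n (A : 'M[R]_(m, n)) : unvec (vecm A) = A.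
Proof. by apply/matrixP => i j; rewrite mxE vecmE. Qed.

Lemma vecmD m n (A B : 'M[R]_(m, n)) : vecm (A + B) = vecm A + vecm B.
Proof. by apply/matrixP => k b; rewrite !mxE. Qed.

Lemma vecmZ m n a (A : 'M[R]_(m, n)) : vecm (a *: A) = a *: vecm A.
Proof. by apply/matrixP => k b; rewrite !mxE. Qed.

Lemma vecm0 m n : vecm (0 : 'M[R]_(m, n)) = 0.
Proof. by apply/matrixP => k b; rewrite !mxE. Qed.

Lemma vecm_sum m n (I : Type) (r : seq I) (P : pred I) (F : I -> 'M[R]_(m, n)) :
  vecm (\sum_(i <- r | P i) F i) = \sum_(i <- r | P i) vecm (F i).
Proof.
elim/big_rec2: _ => [|i y1 y2 _ <-]; first by rewrite vecm0.
by rewrite vecmD.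
Qed.

Lemma unvecZ m n a (u : 'cV[R]_(m * n)) : unvec (a *: u) = a *: unvec u.
Proof. by apply/matrixP => i j; rewrite !mxE. Qed.

Lemma unvecB m n (u v : 'cV[R]_(m * n)) : unvec (u - v) = unvec u - unvec v.
Proof. by apply/matrixP => i j; rewrite !mxE. Qed.

Definition ip m n (A B : 'M[R]_(m, n)) := \sum_i \sum_j A i j * B i j.

Lemma dot_vecm m n (A B : 'M[R]_(m, n)) : dot (vecm A) (vecm B) = ip A B.
Proof.
rewrite /dot sum_pidx; apply: eq_bigr => i _; apply: eq_bigr => j _.
by rewrite !vecmE.
Qed.

Lemma ip_outer m n (x p : 'cV[R]_m) (y q : 'cV[R]_n) :
  ip (x *m y^T) (p *m q^T) = dot x p * dot y q.
Proof.
rewrite /ip /dot mulr_suml; apply: eq_bigr => i _.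
rewrite mulr_sumr; apply: eq_bigr => j _.
rewrite !mxE !big_ord1 !mxE; ring.
Qed.

Lemma frob_sq m n (A : 'M[R]_(m, n)) : frob A ^+ 2 = ip A A.
Proof.
rewrite /frob sqr_sqrtr; last by do 2!(apply: sumr_ge0 => ? _); exact: sqr_ge0.
by apply: eq_bigr => i _; apply: eq_bigr => j _; rewrite expr2.
Qed.

Definition kv m n (p : 'cV[R]_n) (x : 'cV[R]_m) : 'cV[R]_(m * n) :=
  \col_k (x (lo k) 0 * p (hi k) 0).

Lemma bil_rank1 m n (X : 'M[R]_(m * n)) (x y : 'cV[R]_m) (p q : 'cV[R]_n) :
  dot (vecm (x *m y^T)) (rearr X *m vecm (p *m q^T)) =
  dot (kv p x) (X *m kv q y).
Proof.
rewrite /dot sum_pidx [RHS]sum_pidx.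
have E1 i1 i2 : vecm (x *m y^T) (pidx i1 i2) 0 = x i1 0 * y i2 0.
  by rewrite vecmE !mxE big_ord1 !mxE.
have E2 (c : 'I_(n * n)) : vecm (p *m q^T) c 0 = p (lo c) 0 * q (hi c) 0.
  by rewrite !mxE big_ord1 !mxE.
transitivity (\sum_(i1 < m) \sum_(i2 < m) \sum_(j1 < n) \sum_(j2 < n)
   x i1 0 * y i2 0 * (X (pidx i1 j1) (pidx i2 j2) * (p j1 0 * q j2 0))).
  apply: eq_bigr => i1 _; apply: eq_bigr => i2 _.
  rewrite E1 mxE sum_pidx mulr_sumr; apply: eq_bigr => j1 _.
  rewrite mulr_sumr; apply: eq_bigr => j2 _.
  by rewrite E2 lo_pidx hi_pidx mxE !lo_pidx !hi_pidx.
apply: eq_bigr => i1 _; rewrite exchange_big; apply: eq_bigr => j1 _.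
rewrite !mxE lo_pidx hi_pidx mulr_sumr sum_pidx; apply: eq_bigr => i2 _.
apply: eq_bigr => j2 _.
rewrite mxE !lo_pidx !hi_pidx; ring.
Qed.

End Repl.


Section Repl2.
Variable R : realType.

Lemma dot_deltaj n (j : 'I_n) (y : 'cV[R]_n) : dot (delta_mx j 0) y = y j 0.
Proof.
rewrite /dot (bigD1 j) //= big1 => [|i /negPf ne]; rewrite !mxE ?eqxx ?ne ?mul1r ?addr0 //.
by rewrite mul0r.
Qed.

Lemma psd_avg n (X : 'M[R]_n) a b : psd X ->
  dot a (X *m b) <= (dot a (X *m a) + dot b (X *m b)) / 2.
Proof.
move=> [Xs Xq]; have := Xq (a - b); rewrite bilE.
rewrite mulmxBr !(dotBl, dotBr).
have -> : dot b (X *m a) = dot a (X *m b).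
  by rewrite dot_mulmx Xs dotC.
lra.
Qed.

Lemma svd d (A : 'M[R]_d) : exists (sg : 'I_d -> R) (x y : 'I_d -> 'cV[R]_d),
  [/\ forall i, 0 <= sg i, forall i j, dot (y i) (y j) = (i == j)%:R,
      forall i j, i != j -> dot (x i) (x j) = 0,
      forall i, sg i * dot (x i) (x i) = sg i &
      A = \sum_i sg i *: (x i *m (y i)^T)].
Proof.
have AAs : (A^T *m A)^T = A^T *m A by rewrite trmx_mul trmxK.
have [dd [y [yo yS yb]]] := spec_fam AAs.
have dE i j : dot (A *m y i) (A *m y j) = dd i * (i == j)%:R.
  by rewrite dot_mulmx mulmxA yS dotZl yo.
have d0 i : 0 <= dd i by have := dE i i; rewrite eqxx mulr1 => <-; exact: dot_ge0.
pose sg i := Num.sqrt (dd i).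
pose x i := (sg i)^-1 *: (A *m y i).
have Ay i : sg i *: x i = A *m y i.
  have [s0|snz] := eqVneq (sg i) 0.
    have : dd i = 0 by move/eqP: s0; rewrite sqrtr_eq0 => h; apply/le_anti; rewrite h d0.
    move=> dz; have : dot (A *m y i) (A *m y i) = 0 by rewrite dE dz mul0r.
    by move/dot_eq0 => ->; rewrite s0 scale0r.
  by rewrite /x scalerA mulfV // scale1r.
exists sg, x, y; split => //.
- by move=> i; exact: sqrtr_ge0.
- move=> i j ne; rewrite /x dotZl dotZr dE (negPf ne) !mulr0 //.
- move=> i; rewrite /x dotZl dotZr dE eqxx mulr1.
  have [s0|snz] := eqVneq (sg i) 0; first by rewrite s0 mul0r.
  have -> : dd i = sg i ^+ 2 by rewrite sqr_sqrtr.
  by field.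
- apply/matrixP => a b.
  rewrite -[A a b](col_deltaE A a b) (yb (delta_mx b 0)) mulmx_sumr summxE [RHS]summxE.
  apply: eq_bigr => i _; rewrite -scalemxAr (scalemxAl (sg i)) Ay !mxE big_ord1 !mxE.
  by rewrite dotC dot_deltaj mulrC.
Qed.

Lemma bil_expand m n d1 d2 (X : 'M[R]_(m * n))
  (c : 'I_d1 -> R) (x y : 'I_d1 -> 'cV[R]_m)
  (e : 'I_d2 -> R) (p q : 'I_d2 -> 'cV[R]_n) :
  dot (vecm (\sum_i c i *: (x i *m (y i)^T)))
      (rearr X *m vecm (\sum_j e j *: (p j *m (q j)^T))) =
  \sum_i \sum_j c i * e j * dot (kv (p j) (x i)) (X *m kv (q j) (y i)).
Proof.
rewrite vecm_sum dot_suml; apply: eq_bigr => i _.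
rewrite vecm_sum mulmx_sumr dot_sumr; apply: eq_bigr => j _.
by rewrite !vecmZ -scalemxAr dotZl dotZr bil_rank1; ring.
Qed.

Lemma nrm_expand m n d (c : 'I_d -> R) (x : 'I_d -> 'cV[R]_m) (y : 'I_d -> 'cV[R]_n) :
  (forall i j, i != j -> dot (x i) (x j) * dot (y i) (y j) = 0) ->
  dot (vecm (\sum_i c i *: (x i *m (y i)^T))) (vecm (\sum_i c i *: (x i *m (y i)^T)))
  = \sum_i c i ^+ 2 * (dot (x i) (x i) * dot (y i) (y i)).
Proof.
move=> orth.
rewrite vecm_sum dot_suml; apply: eq_bigr => i _.
rewrite dot_sumr (bigD1 i) //= big1 => [|j ne].
  by rewrite addr0 !vecmZ dotZl dotZr dot_vecm ip_outer expr2 mulrA.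
by rewrite !vecmZ dotZl dotZr dot_vecm ip_outer orth ?mulr0 // eq_sym.
Qed.

End Repl2.


Section PartI.
Variable R : realType.

Lemma psd_sum_outer m d (c : 'I_d -> R) (x : 'I_d -> 'cV[R]_m) :
  (forall i, 0 <= c i) -> psd (\sum_i c i *: (x i *m (x i)^T)).
Proof.
move=> c0; split.
  apply/matrixP => a b; rewrite mxE !summxE; apply: eq_bigr => i _.
  by rewrite !mxE !big_ord1 !mxE [x i b _ * _]mulrC.
move=> z; rewrite bilE mulmx_suml dot_sumr; apply: sumr_ge0 => i _.
rewrite -scalemxAl dotZr outerE dotZr dotC -expr2.
by rewrite mulr_ge0 ?sqr_ge0.
Qed.

Lemma unit_dot n (u : 'cV[R]_n) : unit_vec u -> dot u u = 1.
Proof. by rewrite /unit_vec sqnormE. Qed.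

Lemma psd_scale n a (A : 'M[R]_n) : 0 <= a -> psd A -> psd (a *: A).
Proof.
move=> a0 [As Aq]; split.
  by apply/matrixP => i j; rewrite !mxE -[in RHS]As mxE.
move=> z; rewrite -scalemxAr -scalemxAl mxE mulr_ge0 //.
Qed.

Lemma keyG m n (X : 'M[R]_(m * n)) : (0 < m)%N -> (0 < n)%N -> psd X ->
  exists s u v, [/\ top_singular_triple (rearr X) s u v,
    psd (unvec u) & psd (unvec v)].
Proof.
move=> m0 n0 Xp.
have mm : (0 < m * m)%N by rewrite muln_gt0 m0.
have nn : (0 < n * n)%N by rewrite muln_gt0 n0.
have [s [u [v [top B s0]]]] := exists_top (rearr X) mm nn.
have [[_ uu vu Mv _] _] := top.
move/unit_dot: uu => uu; move/unit_dot: vu => vu.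
have uMv : dot u (rearr X *m v) = s by rewrite Mv dotZr uu mulr1.
have [sa [xa [ya [sa0 yao xao xan Aeq]]]] := svd (unvec u).
have [sb [xb [yb [sb0 ybo xbo xbn Beq]]]] := svd (unvec v).
have uE : u = vecm (\sum_i sa i *: (xa i *m (ya i)^T)) by rewrite -Aeq unvecK.
have vE : v = vecm (\sum_i sb i *: (xb i *m (yb i)^T)) by rewrite -Beq unvecK.
pose PA := \sum_i sa i *: (xa i *m (xa i)^T).
pose QA := \sum_i sa i *: (ya i *m (ya i)^T).
pose PB := \sum_i sb i *: (xb i *m (xb i)^T).
pose QB := \sum_i sb i *: (yb i *m (yb i)^T).
have nA : \sum_i sa i ^+ 2 = 1.
  rewrite -uu {1 2}uE nrm_expand => [|i j ne]; last by rewrite yao (negPf ne) mulr0.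
  apply: eq_bigr => i _; rewrite yao eqxx mulr1 expr2 -mulrA xan //.
have nB : \sum_i sb i ^+ 2 = 1.
  rewrite -vu {1 2}vE nrm_expand => [|i j ne]; last by rewrite ybo (negPf ne) mulr0.
  apply: eq_bigr => i _; rewrite ybo eqxx mulr1 expr2 -mulrA xbn //.
have nPA : dot (vecm PA) (vecm PA) = 1.
  rewrite nrm_expand => [|i j ne]; last by rewrite xao // mulr0.
  rewrite -nA; apply: eq_bigr => i _.
  by rewrite -[in RHS](xan i) exprMn [dot _ _ ^+ 2]expr2.
have nPB : dot (vecm PB) (vecm PB) = 1.
  rewrite nrm_expand => [|i j ne]; last by rewrite xbo // mulr0.
  rewrite -nB; apply: eq_bigr => i _.
  by rewrite -[in RHS](xbn i) exprMn [dot _ _ ^+ 2]expr2.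
have nQA : dot (vecm QA) (vecm QA) = 1.
  rewrite nrm_expand => [|i j ne]; last by rewrite yao (negPf ne) mulr0.
  by rewrite -nA; apply: eq_bigr => i _; rewrite yao eqxx !mulr1.
have nQB : dot (vecm QB) (vecm QB) = 1.
  rewrite nrm_expand => [|i j ne]; last by rewrite ybo (negPf ne) mulr0.
  by rewrite -nB; apply: eq_bigr => i _; rewrite ybo eqxx !mulr1.
pose sP := dot (vecm PA) (rearr X *m vecm PB).
pose sQ := dot (vecm QA) (rearr X *m vecm QB).
have hs : s <= (sP + sQ) / 2.
  rewrite -uMv uE vE /sP /sQ /PA /PB /QA /QB !bil_expand.
  rewrite -big_split /= mulr_suml; apply: ler_sum => i _.
  rewrite -big_split /= mulr_suml; apply: ler_sum => j _.
  rewrite -mulrDr -!mulrA; apply: ler_wpM2l => //; apply: ler_wpM2l => //.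
  exact: psd_avg.
have nrm1 k (w : 'cV[R]_k) : dot w w = 1 -> nrm w = 1 by move=> h; rewrite /nrm h sqrtr1.
have hP : sP <= s by rewrite (le_trans (B _ _)) // !nrm1 // !mulr1.
have hQ : sQ <= s by rewrite (le_trans (B _ _)) // !nrm1 // !mulr1.
have eP : sP = s by lra.
exists s, (vecm PA), (vecm PB); split.
- exact: top_of_max.
- by rewrite vecmK; apply: psd_sum_outer.
- by rewrite vecmK; apply: psd_sum_outer.
Qed.

Lemma partI (d1 d2 d3 : nat) (Sc : 'M[R]_(d1 * (d2 * d3))) :
    (0 < d1)%N -> (0 < d2)%N -> (0 < d3)%N ->
    psd Sc ->
    exists (s1 : R) (u1 : 'cV[R]_(d1 * d1))
           (v1 : 'cV[R]_((d2 * d3) * (d2 * d3)))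
           (sig1 : R) (a1 : 'cV[R]_(d2 * d2)) (b1 : 'cV[R]_(d3 * d3)),
      [/\ hsvd_choice Sc s1 u1 v1 sig1 a1 b1,
          psd (hsvd1 u1), psd (hsvd2 a1) & psd (hsvd3 sig1 b1)].
Proof.
move=> h1 h2 h3 Sp.
have h23 : (0 < d2 * d3)%N by rewrite muln_gt0 h2.
have [s1 [u1 [v1 [t1 pu1 pv1]]]] := keyG h1 h23 Sp.
have s10 : 0 <= s1 by case: t1 => [[]].
have p2 : psd (unvec (s1 *: v1) : 'M[R]_(d2 * d3)) by rewrite unvecZ; exact: psd_scale.
have [sig [a [b [t2 pa pb]]]] := keyG h2 h3 p2.
have sig0 : 0 <= sig by case: t2 => [[]].
exists s1, u1, v1, sig, a, b; split => //.
by rewrite /hsvd3 unvecZ; apply: psd_scale.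
Qed.

End PartI.


Section Pert.
Variable R : realType.

Lemma frob_vecm m n (Z : 'M[R]_(m, n)) : frob Z = nrm (vecm Z).
Proof.
by rewrite /nrm dot_vecm /frob /ip; congr Num.sqrt; do 2!(apply: eq_bigr => ? _); rewrite expr2.
Qed.

Lemma vecmB m n (A B : 'M[R]_(m, n)) : vecm (A - B) = vecm A - vecm B.
Proof. by apply/matrixP => k b; rewrite !mxE. Qed.

Lemma rearrB m n (A B : 'M[R]_(m * n)) : rearr (A - B) = rearr A - rearr B.
Proof. by apply/matrixP => i j; rewrite !mxE. Qed.

Lemma rearr_kron m n (B : 'M[R]_n) (A : 'M[R]_m) :
  rearr (kron B A) = vecm A *m (vecm B)^T.
Proof.
apply/matrixP => r c; rewrite !mxE big_ord1 !mxE !lo_pidx !hi_pidx mulrC //.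
Qed.

Lemma ip_rearr m n (Z : 'M[R]_(m * n)) : ip (rearr Z) (rearr Z) = ip Z Z.
Proof.
rewrite /ip sum_pidx [RHS]sum_pidx.
transitivity (\sum_(i1 < m) \sum_(i2 < m) \sum_(j1 < n) \sum_(j2 < n)
   Z (pidx i1 j1) (pidx i2 j2) ^+ 2).
  apply: eq_bigr => i1 _; apply: eq_bigr => i2 _; rewrite sum_pidx.
  apply: eq_bigr => j1 _; apply: eq_bigr => j2 _.
  by rewrite mxE !lo_pidx !hi_pidx expr2.
apply: eq_bigr => i1 _; rewrite exchange_big; apply: eq_bigr => j1 _.
rewrite sum_pidx; apply: eq_bigr => i2 _; apply: eq_bigr => j2 _.
by rewrite expr2.
Qed.

Lemma frob_rearr m n (Z : 'M[R]_(m * n)) : frob (rearr Z) = frob Z.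
Proof.
have e k l (W : 'M[R]_(k, l)) : frob W = Num.sqrt (ip W W).
  by rewrite /frob /ip; congr Num.sqrt; do 2!(apply: eq_bigr => ? _); rewrite expr2.
by rewrite !e ip_rearr.
Qed.

Lemma frob_tr m n (Z : 'M[R]_(m, n)) : frob Z^T = frob Z.
Proof. by rewrite /frob exchange_big; congr Num.sqrt; do 2!(apply: eq_bigr => ? _); rewrite mxE. Qed.

Lemma frob_ge0 m n (Z : 'M[R]_(m, n)) : 0 <= frob Z.
Proof. exact: sqrtr_ge0. Qed.

Lemma nrm_mul_le m n (E : 'M[R]_(m, n)) (b : 'cV[R]_n) : nrm (E *m b) <= frob E * nrm b.
Proof.
rewrite -ler_sqr; last 2 first.
- by rewrite nnegrE nrm_ge0.
- by rewrite nnegrE mulr_ge0 ?frob_ge0 ?nrm_ge0.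
rewrite exprMn nrm_sq nrm_sq /frob sqr_sqrtr; last by do 2!(apply: sumr_ge0 => ? _); exact: sqr_ge0.
rewrite /dot mulr_suml; apply: ler_sum => i _.
have := CS (row i E)^T b.
rewrite /dot.
have -> : \sum_i0 (row i E)^T i0 0 * b i0 0 = (E *m b) i 0.
  by rewrite mxE; apply: eq_bigr => k _; rewrite !mxE.
move=> h; rewrite -expr2 (le_trans h) //; apply: ler_wpM2r; first exact: dot_ge0.
by apply: ler_sum => j _; rewrite !mxE expr2.
Qed.

Lemma nrmN n (a : 'cV[R]_n) : nrm (- a) = nrm a.
Proof. by rewrite /nrm dotNl dotNr opprK. Qed.

Lemma abs_bil m n (E : 'M[R]_(m, n)) a b :
  `|dot a (E *m b)| <= frob E * nrm a * nrm b.
Proof.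
have h w : dot w (E *m b) <= frob E * nrm w * nrm b.
  apply: (le_trans (dot_le_nrm _ _)).
  have := nrm_mul_le E b; have := nrm_ge0 w; have := nrm_ge0 (E *m b); nra.
rewrite ler_norml h andbT; have := h (- a); rewrite dotNl nrmN; lra.
Qed.

Lemma coord_le n (w : 'cV[R]_n) k : w k 0 ^+ 2 <= dot w w.
Proof.
rewrite /dot (bigD1 k) //= -expr2 lerDl; apply: sumr_ge0 => i _.
by rewrite -expr2 sqr_ge0.
Qed.

End Pert.


Section Pert2.
Variable R : realType.

Lemma dim_pos k (w : 'cV[R]_k) : dot w w = 1 -> (0 < k)%N.
Proof. by case: k w => // w; rewrite /dot big_ord0 => /eqP; rewrite eq_sym oner_eq0. Qed.

Lemma outerE2 m n (w : 'cV[R]_m) (z v : 'cV[R]_n) : (w *m z^T) *m v = dot z v *: w.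
Proof.
rewrite -mulmxA; apply/matrixP => i j; rewrite (ord1 j) !mxE big_ord1.
by rewrite mulrC dotE.
Qed.

Lemma nrmZ n a (w : 'cV[R]_n) : nrm (a *: w) = `|a| * nrm w.
Proof. by rewrite /nrm dotZl dotZr mulrA -expr2 sqrtrM ?sqr_ge0 // sqrtr_sqr. Qed.

Lemma abs_dot_le n (a b : 'cV[R]_n) : `|dot a b| <= nrm a * nrm b.
Proof.
rewrite ler_norml dot_le_nrm andbT; have := dot_le_nrm (- a) b.
by rewrite dotNl nrmN; lra.
Qed.

Lemma pert m n (X : 'M[R]_(m * n)) (A : 'M[R]_m) (B : 'M[R]_n) s u v (i0 : 'I_m) :
  top_singular_triple (rearr X) s u v -> psd (unvec u) ->
  0 < A i0 i0 -> frob A = 1 -> 0 < frob B ->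
  4 * frob (X - kron B A) < frob B * A i0 i0 ^+ 2 ->
  frob (unvec u - A) ^+ 2 <= 4 * frob (X - kron B A) / frob B /\
  frob (unvec (s *: v) - B) <= 3 * frob (X - kron B A).
Proof.
move=> top pu a0 fA cpos small.
set dl := frob (X - kron B A) in small *; set c := frob B in cpos small *.
set a := A i0 i0 in a0 small.
pose x := vecm A; pose y := vecm B.
have nx : nrm x = 1 by rewrite -frob_vecm.
have ny : nrm y = c by rewrite -frob_vecm.
have xx : dot x x = 1 by rewrite -nrm_sq nx expr1n.
have yy : dot y y = c ^+ 2 by rewrite -nrm_sq ny.
pose M := rearr X; pose E := M - x *m y^T.
have ME : M = x *m y^T + E by rewrite /E addrC subrK.
have fE : frob E = dl by rewrite /E /M /x /y -rearr_kron -rearrB frob_rearr.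
have dl0 : 0 <= dl by exact: frob_ge0.
have [[s0 uu vu Mv MTu] topM] := top.
move/unit_dot: uu => uu; move/unit_dot: vu => vu.
have [s' [u' [v' [top' Bnd' s'0]]]] := exists_top M (dim_pos uu) (dim_pos vu).
have ss' : s = s'.
  apply/le_anti; rewrite (topM _ _ _ top'.1) andbT.
  by apply: top'.2; exact: top.1.
rewrite -ss' in Bnd'.
have nu : nrm u = 1 by rewrite /nrm uu sqrtr1.
have nv : nrm v = 1 by rewrite /nrm vu sqrtr1.
pose t := dot u x.
have low : c ^+ 2 - dl * c <= s * c.
  have h1 : dot x (M *m y) <= s * c by rewrite (le_trans (Bnd' _ _)) // nx ny mulr1.
  have h2 : dot x (M *m y) = c ^+ 2 + dot x (E *m y).
    by rewrite ME mulmxDl outerE2 dotDr dotZr xx yy mulr1.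
  have := abs_bil E x y; rewrite fE nx ny mulr1 ler_norml => /andP [h3 _].
  lra.
have slow : c - dl <= s.
  have : (c - dl) * c <= s * c by rewrite mulrBl -expr2.
  by rewrite ler_pM2r.
have up : s <= dot y v * t + dl.
  have -> : s = dot u (M *m v) by rewrite Mv dotZr uu mulr1.
  rewrite ME mulmxDl outerE2 dotDr dotZr -/t.
  have := abs_bil E u v; rewrite fE nu nv !mulr1 ler_norml => /andP [_ h].
  lra.
have yv : `|dot y v| <= c by have := abs_dot_le y v; rewrite ny nv mulr1.
have t1 : t <= 1 by have := dot_le_nrm u x; rewrite nu nx mulr1.
pose k := pidx i0 i0.
have uk : 0 <= u k 0.
  by have := pu.2 (delta_mx i0 0); rewrite bilE dot_deltaj col_deltaE mxE.
have xk : x k 0 = a by rewrite /x vecmE.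
have t0 : 0 <= t.
  rewrite leNgt; apply/negP => tneg.
  have h1 : dot y v * t <= - (c * t).
    have := ler_norml (dot y v) c; rewrite yv => /esym /andP [h _].
    nra.
  have h2 : dot (u + x) (u + x) = 2 + 2 * t.
    by rewrite !(dotDl, dotDr) uu xx (dotC x u) -/t; ring.
  have h3 : a ^+ 2 <= dot (u + x) (u + x).
    apply: le_trans (coord_le _ k); rewrite mxE xk.
    by rewrite ler_sqr ?nnegrE; lra.
  nra.
have h1 : dot y v * t <= c * t.
  have := ler_norml (dot y v) c; rewrite yv => /esym /andP [_ h].
  by rewrite (ler_wpM2r t0).
have ct : c * (1 - t) <= 2 * dl by lra.
split.
- rewrite frob_vecm vecmB unvecK -/x nrm_sq.
  have -> : dot (u - x) (u - x) = 2 - 2 * t.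
    by rewrite !(dotBl, dotBr) uu xx (dotC x u) -/t; ring.
  rewrite ler_pdivlMr //; lra.
- rewrite frob_vecm vecmB unvecK -/y -MTu.
  have -> : M^T *m u - y = (t - 1) *: y + E^T *m u.
    rewrite ME linearD /= mulmxDl trmx_mul trmxK outerE2 (dotC x u) -/t.
    by rewrite scalerBl scale1r addrAC.
  apply: (le_trans (nrm_triangle _ _)).
  rewrite nrmZ ny.
  have := nrm_mul_le E^T u; rewrite frob_tr fE nu mulr1 => h.
  have : `|t - 1| = 1 - t by rewrite ler0_norm ?opprB // subr_le0.
  move=> ->; lra.
Qed.

End Pert2.


Section PartII.
Variable R : realType.

Lemma frob_entry m n (Z : 'M[R]_(m, n)) i j : Z i j ^+ 2 <= frob Z ^+ 2.
Proof. by rewrite frob_vecm nrm_sq -(vecmE Z i j) coord_le. Qed.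

Lemma frob_pos_entry m n (Z : 'M[R]_(m, n)) i j : 0 < Z i j -> 0 < frob Z.
Proof.
move=> h; rewrite lt_def frob_ge0 andbT; apply/eqP => f0.
have := frob_entry Z i j; rewrite f0 expr0n /=.
have : 0 < Z i j ^+ 2 by rewrite exprn_gt0.
lra.
Qed.

Lemma frob1_pos m (Z : 'M[R]_m) : frob Z = 1 -> (0 < m)%N.
Proof.
case: m Z => // Z; rewrite /frob big_ord0 sqrtr0 => /eqP.
by rewrite eq_sym oner_eq0.
Qed.

Lemma pd_diag m (Z : 'M[R]_m) i : pd Z -> 0 < Z i i.
Proof.
move=> [_ Zq]; have := Zq (delta_mx i 0).
rewrite bilE dot_deltaj col_deltaE; apply.
apply/eqP => /matrixP /(_ i 0); rewrite !mxE !eqxx /=.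
by move/eqP; rewrite oner_eq0.
Qed.

Lemma det3 d1 d2 d3 (Sig1 : 'M[R]_d1) (Sig2 : 'M[R]_d2) (Sig3 : 'M[R]_d3)
  (X : 'M[R]_(d1 * (d2 * d3))) s1 u1 v1 sig1 a1 b1 (i1 : 'I_d1) (i2 : 'I_d2) dl :
  hsvd_choice X s1 u1 v1 sig1 a1 b1 -> psd (hsvd1 u1) -> psd (hsvd2 a1) ->
  0 < Sig1 i1 i1 -> 0 < Sig2 i2 i2 -> frob Sig1 = 1 -> frob Sig2 = 1 ->
  0 < frob (kron Sig3 Sig2) -> 0 < frob Sig3 ->
  frob (X - kron (kron Sig3 Sig2) Sig1) <= dl ->
  4 * dl < frob (kron Sig3 Sig2) * Sig1 i1 i1 ^+ 2 ->
  12 * dl < frob Sig3 * Sig2 i2 i2 ^+ 2 ->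
  [/\ frob (hsvd1 u1 - Sig1) ^+ 2 <= 4 * dl / frob (kron Sig3 Sig2),
      frob (hsvd2 a1 - Sig2) ^+ 2 <= 12 * dl / frob Sig3 &
      frob (hsvd3 sig1 b1 - Sig3) <= 9 * dl].
Proof.
move=> [t1 t2] p1 p2 a1p a2p f1 f2 c1p c2p hd s1c s2c.
set c1 := frob (kron Sig3 Sig2) in c1p s1c *.
set c2 := frob Sig3 in c2p s2c *.
set d0 := frob (X - _) in hd.
have d00 : 0 <= d0 by exact: frob_ge0.
have s1c' : 4 * d0 < c1 * Sig1 i1 i1 ^+ 2 by lra.
have [L1 L2] := pert t1 p1 a1p f1 c1p s1c'.
rewrite -/d0 -/c1 in L1 L2.
have e1 : 4 * d0 / c1 <= 4 * dl / c1.
  by rewrite ler_pM2r ?invr_gt0 // ler_wpM2l.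
have L2' : frob (unvec (s1 *: v1) - kron Sig3 Sig2) <= 3 * dl by lra.
have s2c' : 4 * frob (unvec (s1 *: v1) - kron Sig3 Sig2) < c2 * Sig2 i2 i2 ^+ 2 by lra.
have [M1 M2] := pert t2 p2 a2p f2 c2p s2c'.
set d2' := frob (unvec _ - _) in L2' s2c' M1 M2.
split.
- by apply: (le_trans L1).
- apply: (le_trans M1); rewrite ler_pM2r ?invr_gt0 //; lra.
- rewrite /hsvd3; lra.
Qed.

Lemma eta_exists (a b c d e : R) : 0 < a -> 0 < b -> 0 < c -> 0 < d -> 0 < e ->
  exists eta, [/\ 0 < eta, eta <= a, eta <= b, eta <= c & eta <= d /\ eta <= e].
Proof.
move=> a0 b0 c0 d0 e0.
exists (Order.min a (Order.min b (Order.min c (Order.min d e)))).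
split; rewrite ?lt_min ?a0 ?b0 ?c0 ?d0 ?e0 ?ge_min ?lexx ?orbT //.
Qed.

End PartII.


Lemma conv_lift (R : realType) (d : measure_display) (Omega : measurableType d)
  (P : probability Omega R) m n k l (X : nat -> Omega -> 'M[R]_(m, n)) K
  (Y : nat -> Omega -> 'M[R]_(k, l)) L :
  conv_in_prob P X K ->
  (forall eps : R, 0 < eps -> exists2 eta : R, 0 < eta &
     forall T w, frob (X T w - K) <= eta -> frob (Y T w - L) <= eps) ->
  conv_in_prob P Y L.
Proof.
move=> cX det eps dlt e0 d0.
have [eta eta0 Heta] := det eps e0.
have [N HN] := cX eta dlt eta0 d0.
exists N => T hT; have [A [mA PA sub]] := HN T hT.
exists A; split => // w /= hw; apply: sub => /=.
rewrite ltNge; apply/negP => h; have := Heta T w h.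
by rewrite leNgt hw.
Qed.

Lemma sq_le_le (R : realType) (x e : R) : 0 <= x -> 0 <= e -> x ^+ 2 <= e ^+ 2 -> x <= e.
Proof. by move=> x0 e0; rewrite ler_sqr ?nnegrE. Qed.

Theorem proposition2 :
  (* (i) *)
  (forall (R : realType) (d1 d2 d3 : nat) (Sc : 'M[R]_(d1 * (d2 * d3))),
    (0 < d1)%N -> (0 < d2)%N -> (0 < d3)%N ->
    psd Sc ->
    exists (s1 : R) (u1 : 'cV[R]_(d1 * d1))
           (v1 : 'cV[R]_((d2 * d3) * (d2 * d3)))
           (sig1 : R) (a1 : 'cV[R]_(d2 * d2)) (b1 : 'cV[R]_(d3 * d3)),
      [/\ hsvd_choice Sc s1 u1 v1 sig1 a1 b1,
          psd (hsvd1 u1), psd (hsvd2 a1) & psd (hsvd3 sig1 b1)]) /\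
  (* (ii) *)
  (forall (R : realType) (d : measure_display) (Omega : measurableType d)
     (P : probability Omega R) (d1 d2 d3 : nat)
     (Sig1 : 'M[R]_d1) (Sig2 : 'M[R]_d2) (Sig3 : 'M[R]_d3)
     (Sc : nat -> Omega -> 'M[R]_(d1 * (d2 * d3)))
     (s1 : nat -> Omega -> R) (u1 : nat -> Omega -> 'cV[R]_(d1 * d1))
     (v1 : nat -> Omega -> 'cV[R]_((d2 * d3) * (d2 * d3)))
     (sig1 : nat -> Omega -> R) (a1 : nat -> Omega -> 'cV[R]_(d2 * d2))
     (b1 : nat -> Omega -> 'cV[R]_(d3 * d3)),
    pd Sig1 -> pd Sig2 -> pd Sig3 ->
    frob Sig1 = 1 -> frob Sig2 = 1 ->
    (forall T w, psd (Sc T w)) ->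
    conv_in_prob P Sc (kron (kron Sig3 Sig2) Sig1) ->
    (forall T w,
      [/\ hsvd_choice (Sc T w) (s1 T w) (u1 T w) (v1 T w)
                      (sig1 T w) (a1 T w) (b1 T w),
          psd (hsvd1 (u1 T w)), psd (hsvd2 (a1 T w))
        & psd (hsvd3 (sig1 T w) (b1 T w))]) ->
    [/\ conv_in_prob P (fun T w => hsvd1 (u1 T w)) Sig1,
        conv_in_prob P (fun T w => hsvd2 (a1 T w)) Sig2
      & conv_in_prob P (fun T w => hsvd3 (sig1 T w) (b1 T w)) Sig3]).
Proof.
split; first exact: partI.
move=> R d Omega P d1 d2 d3 Sig1 Sig2 Sig3 Sc s1 u1 v1 sig1 a1 b1
  pd1 pd2 pd3 f1 f2 _ cv Hw.
have d1p := frob1_pos f1; have d2p := frob1_pos f2.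
have [d30|d3p] := posnP d3.
  have triv k l (Y : nat -> Omega -> 'M[R]_(k, l)) L : conv_in_prob P Y L.
    move=> eps dlt _ dlt0; exists 0%N => T _; exists set0; split => //.
      by rewrite measure0 lee_fin ltW.
    move=> w _; have [[_ [[_ _ bu _ _] _]] _ _ _] := Hw T w.
    by have := dim_pos (unit_dot bu); rewrite d30.
  by split; apply: triv.
pose i1 : 'I_d1 := Ordinal d1p; pose i2 : 'I_d2 := Ordinal d2p.
pose i3 : 'I_d3 := Ordinal d3p.
have a1p := pd_diag i1 pd1; have a2p := pd_diag i2 pd2; have a3p := pd_diag i3 pd3.
have c1p : 0 < frob (kron Sig3 Sig2).
  apply: (@frob_pos_entry _ _ _ _ (pidx i2 i3) (pidx i2 i3)).
  by rewrite mxE !lo_pidx !hi_pidx mulr_gt0.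
have c2p : 0 < frob Sig3 by apply: (frob_pos_entry a3p).
clearbody i1 i2 i3.
have det eps : 0 < eps -> exists2 eta : R, 0 < eta & forall T w,
    frob (Sc T w - kron (kron Sig3 Sig2) Sig1) <= eta ->
    [/\ frob (hsvd1 (u1 T w) - Sig1) <= eps,
        frob (hsvd2 (a1 T w) - Sig2) <= eps &
        frob (hsvd3 (sig1 T w) (b1 T w) - Sig3) <= eps].
  move=> e0.
  have [eta [eta0 ha hb hc [hd he]]] := @eta_exists R
    (frob (kron Sig3 Sig2) * Sig1 i1 i1 ^+ 2 / 8) (frob Sig3 * Sig2 i2 i2 ^+ 2 / 24)
    (frob (kron Sig3 Sig2) * eps ^+ 2 / 4) (frob Sig3 * eps ^+ 2 / 12) (eps / 9)
    ltac:(by rewrite !mulr_gt0 ?exprn_gt0) ltac:(by rewrite !mulr_gt0 ?exprn_gt0)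
    ltac:(by rewrite !mulr_gt0 ?exprn_gt0) ltac:(by rewrite !mulr_gt0 ?exprn_gt0)
    ltac:(by rewrite !mulr_gt0).
  exists eta => // T w hdl.
  have [hc0 p1 p2 _] := Hw T w.
  have s1c : 4 * eta < frob (kron Sig3 Sig2) * Sig1 i1 i1 ^+ 2.
    have : 0 < frob (kron Sig3 Sig2) * Sig1 i1 i1 ^+ 2 by rewrite mulr_gt0 ?exprn_gt0.
    lra.
  have s2c : 12 * eta < frob Sig3 * Sig2 i2 i2 ^+ 2.
    have : 0 < frob Sig3 * Sig2 i2 i2 ^+ 2 by rewrite mulr_gt0 ?exprn_gt0.
    lra.
  have [L1 L2 L3] := det3 hc0 p1 p2 a1p a2p f1 f2 c1p c2p hdl s1c s2c.
  split.
  - apply: sq_le_le; [exact: frob_ge0 | exact: ltW | apply: (le_trans L1)].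
    by rewrite ler_pdivrMr //; lra.
  - apply: sq_le_le; [exact: frob_ge0 | exact: ltW | apply: (le_trans L2)].
    by rewrite ler_pdivrMr //; lra.
  - lra.
split.
- apply: (conv_lift cv) => eps e0; have [eta eta0 H] := det eps e0.
  by exists eta => // T w h; have [] := H T w h.
- apply: (conv_lift cv) => eps e0; have [eta eta0 H] := det eps e0.
  by exists eta => // T w h; have [] := H T w h.
- apply: (conv_lift cv) => eps e0; have [eta eta0 H] := det eps e0.
  by exists eta => // T w h; have [] := H T w h.
Qed.
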